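(* For positive integers $i$ and $r\ge0$ let $\overline{\mathbf p}_{i^r}=i^r\big(\frac1i\sum_{d\mid i}\mu(i/d)p_d\big)_r$ and for a partition $\gamma$ let $\overline{\mathbf p}_\gamma=\prod_{i\ge1}\overline{\mathbf p}_{i^{m_i(\gamma)}}$. For partitions $\gamma$ and $\mu$ with $|\mu|<|\gamma|$, $\overline{\mathbf p}_\gamma[\Xi_\mu]=0$. Moreover, if $|\mu|=|\gamma|$, then $\overline{\mathbf p}_\gamma[\Xi_\mu]=z_\gamma\,\delta_{\gamma=\mu}$.
   Context: $\mu(\cdot)$ inside the sum denotes the Möbius function; $(x)_r=x(x-1)\cdots(x-r+1)$; $m_i(\gamma)$ is the number of parts of $\gamma$ equal to $i$; $z_\gamma=\prod_i i^{m_i(\gamma)}m_i(\gamma)!$; $\delta_{\gamma=\mu}$ is $1$ if $\gamma=\mu$ and $0$ otherwise. For a partition $\mu$ and $f\in Sym=\mathbb{Q}[p_1,p_2,\ldots]$, $f[\Xi_\mu]$ denotes the evaluation of $f$ at the eigenvalues of a permutation matrix of cycle type $\mu$, i.e. substituting $p_k\mapsto\sum_{d\mid k}d\,m_d(\mu)$. *)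

(* Defs.v *)
From mathcomp Require Import all_boot all_order all_algebra.
Set Implicit Arguments. Unset Strict Implicit. Unset Printing Implicit Defensive.
Import Order.TTheory GRing.Theory Num.Theory.
Local Open Scope ring_scope.

Definition is_partition (s : seq nat) : bool :=
  sorted geq s && all (fun x => 0 < x)%N s.

Definition psize (s : seq nat) : nat := sumn s.

Definition mult (i : nat) (s : seq nat) : nat := count_mem i s.

(* Moebius function (mu 0 := 0 by convention; never used at 0 here). *)
Definition moebius (n : nat) : rat :=
  if n == 0%N then 0
  else if all (fun p => logn p n <= 1)%N (primes n)
       then (-1) ^+ size (primes n) else 0.

Definition falling (x : rat) (r : nat) : rat := \prod_(j < r) (x - j%:R).

(* p_k[Xi_mu] = sum_{d | k} d * m_d(mu) *)
Definition p_eval (mu : seq nat) (k : nat) : rat :=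
  \sum_(d <- divisors k) (d * mult d mu)%:R.

Definition pbar_lin_eval (mu : seq nat) (i : nat) : rat :=
  i%:R^-1 * \sum_(d <- divisors i) moebius (i %/ d) * p_eval mu d.

Definition pbar_pow_eval (mu : seq nat) (i r : nat) : rat :=
  (i ^ r)%:R * falling (pbar_lin_eval mu i) r.

(* overline{p}_gamma[Xi_mu] = prod_{i >= 1} overline{p}_{i^{m_i(gamma)}}[Xi_mu];
   factors with i > |gamma| have m_i(gamma) = 0 and equal 1. *)
Definition pbar_eval (gamma mu : seq nat) : rat :=
  \prod_(1 <= i < (psize gamma).+1) pbar_pow_eval mu i (mult i gamma).

Definition zee (gamma : seq nat) : nat :=
  \prod_(1 <= i < (psize gamma).+1) (i ^ mult i gamma * (mult i gamma)`!)%N.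

(* Main.v *)
Require Import Defs.
From mathcomp Require Import all_boot all_order all_algebra.
Set Implicit Arguments. Unset Strict Implicit. Unset Printing Implicit Defensive.
Import Order.TTheory GRing.Theory Num.Theory.
Local Open Scope ring_scope.

Lemma moebius_pM p d : prime p -> (0 < d)%N -> ~~ (p %| d)%N ->
  moebius (p * d) = - moebius d.
Proof.
move=> pp d0 npd; have p0 := prime_gt0 pp.
have pd0 : (0 < p * d)%N by rewrite muln_gt0 p0.
have Hperm : perm_eq (primes (p * d)) (p :: primes d).
  apply: uniq_perm; first exact: primes_uniq.
    rewrite /= primes_uniq andbT mem_primes (negbTE npd) !andbF //.
  by move=> q; rewrite primesM // primes_prime // !in_cons in_nil orbF.
rewrite /moebius; case: eqP => [H|_]; first by move: pd0; rewrite H.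
case: eqP => [H|_]; first by move: d0; rewrite H.
rewrite (perm_size Hperm). rewrite (@perm_all _ _ _ _ Hperm). rewrite /= lognM // logn_prime // eqxx.
rewrite logn_coprime ?prime_coprime //.
have -> : all (fun q => logn q (p * d) <= 1)%N (primes d) =
          all (fun q => logn q d <= 1)%N (primes d).
  apply: eq_in_all => q; rewrite mem_primes => /and3P[pq _ qd].
  rewrite lognM // logn_prime //.
  case: eqP => // qp; subst q; by rewrite qd in npd.
have -> : (true + 0 <= 1)%N = true by []. rewrite andTb.
case: ifP => _; [by rewrite exprS mulN1r | by rewrite oppr0].
Qed.

Lemma moebius_sq p d : prime p -> (0 < d)%N -> (p * p %| d)%N -> moebius d = 0.
Proof.
move=> pp d0 ppd; rewrite /moebius (negbTE (lt0n_neq0 d0)).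
have pd : p \in primes d.
  by rewrite mem_primes pp d0 (dvdn_trans (dvdn_mulr _ (dvdnn p)) ppd).
have : (2 <= logn p d)%N by rewrite -pfactor_dvdn // expn2.
case: ifP => // /allP /(_ p pd) /= le1 le2.
by have := leq_trans le2 le1.
Qed.

Lemma mem_div_perm p n : (0 < p)%N -> (p %| n)%N -> (0 < n)%N ->
  perm_eq [seq d <- divisors n | (p %| d)%N] (map (muln p) (divisors (n %/ p)%N)).
Proof.
move=> p0 pn n0.
have En : n = (p * (n %/ p))%N by rewrite mulnC divnK.
have m0 : (0 < n %/ p)%N by rewrite divn_gt0 // dvdn_leq.
apply: uniq_perm.
- exact/filter_uniq/divisors_uniq.
- rewrite map_inj_uniq ?divisors_uniq // => a b /eqP; rewrite eqn_pmul2l // => /eqP //.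
move=> x; rewrite mem_filter -dvdn_divisors //; apply/andP/mapP.
- case=> px xn; exists (x %/ p)%N; last by rewrite mulnC divnK.
  rewrite -dvdn_divisors // -(@dvdn_pmul2l p) // mulnC divnK // -En //.
- case=> e; rewrite -dvdn_divisors // => em ->; split; first exact: dvdn_mulr.
  by rewrite En dvdn_pmul2l.
Qed.

Lemma moebius1 : moebius 1 = 1.
Proof. by rewrite /moebius. Qed.

Lemma moebius_sum n : (0 < n)%N ->
  \sum_(d <- divisors n) moebius d = (n == 1%N)%:R.
Proof.
move=> n0; case: (ltngtP n 1) => [|n1|->]; first by case: n n0.
  2: by rewrite /divisors /= big_cons big_nil moebius1 addr0.
move: (pdiv_prime n1) (pdiv_dvd n); move: (pdiv n) => p pp pn.
have p0 := prime_gt0 pp.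
move: (erefl (n %/ p)%N); move: {2}(n %/ p)%N => m Em.
have En : n = (m * p)%N by rewrite -Em divnK.
have m0 : (0 < m)%N by rewrite -Em divn_gt0 // dvdn_leq.
rewrite (bigID (fun d => p %| d)%N) /=.
have E1 : \sum_(d <- divisors n | (p %| d)%N) moebius d =
          - \sum_(e <- divisors m | ~~ (p %| e)%N) moebius e.
  rewrite -big_filter (perm_big _ (mem_div_perm p0 pn n0)) Em big_map.
  rewrite big_seq (bigID (fun e => p %| e)%N) /= big1 ?add0r; last first.
    move=> e /andP[]; rewrite -(dvdn_divisors _ m0) => em pe.
    apply: (moebius_sq pp); first by rewrite muln_gt0 p0 (dvdn_gt0 m0 em).
    by rewrite dvdn_pmul2l.
  rewrite [in RHS]big_seq_cond -sumrN; apply: eq_bigr => e /andP[]; rewrite -(dvdn_divisors _ m0) => em pe.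
  exact: moebius_pM (dvdn_gt0 m0 em) pe.
have E2 : \sum_(d <- divisors n | ~~ (p %| d)%N) moebius d =
          \sum_(e <- divisors m | ~~ (p %| e)%N) moebius e.
  rewrite -[LHS]big_filter -[RHS]big_filter; apply: perm_big; apply: uniq_perm.
  - exact/filter_uniq/divisors_uniq.
  - exact/filter_uniq/divisors_uniq.
  move=> x; rewrite !mem_filter -(dvdn_divisors _ n0) -(dvdn_divisors _ m0).
  case px: (p %| x)%N => //=.
  rewrite {1}En Gauss_dvdl //; by rewrite coprime_sym prime_coprime // px.
rewrite E1 E2 addNr; case: (@eqP _ n 1%N) => // E; move: n1; rewrite E.
Qed.

Lemma divnKK m k : (0 < m)%N -> (k %| m)%N -> (m %/ (m %/ k))%N = k.
Proof.
move=> m0 km; have k0 : (0 < k)%N := dvdn_gt0 m0 km.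
have mk0 : (0 < m %/ k)%N by rewrite divn_gt0 // dvdn_leq.
have E : m = (m %/ k * k)%N by rewrite divnK.
by rewrite {1}E mulKn.
Qed.

Lemma dvdn_divl m k : (k %| m)%N -> (m %/ k %| m)%N.
Proof. by move=> km; apply/dvdnP; exists k; rewrite mulnC divnK. Qed.

Lemma divisors_rev m : (0 < m)%N ->
  perm_eq (divisors m) (map (fun k => m %/ k)%N (divisors m)).
Proof.
move=> m0; apply: uniq_perm; first exact: divisors_uniq.
  rewrite map_inj_in_uniq ?divisors_uniq // => a b.
  rewrite -!dvdn_divisors // => am bm E.
  by rewrite -(divnKK m0 am) E divnKK.
move=> x; apply/idP/mapP.
  rewrite -dvdn_divisors // => xm; exists (m %/ x)%N; last by rewrite divnKK.
  by rewrite -dvdn_divisors // dvdn_divl.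
by case=> k; rewrite -!dvdn_divisors // => km ->; rewrite dvdn_divl.
Qed.

Lemma sum_divisors_rev m (F : nat -> rat) : (0 < m)%N ->
  \sum_(k <- divisors m) F (m %/ k)%N = \sum_(k <- divisors m) F k.
Proof. by move=> m0; rewrite [RHS](perm_big _ (divisors_rev m0)) big_map. Qed.

Lemma sub_divisors_perm n d : (0 < n)%N -> (d %| n)%N ->
  perm_eq (divisors d) [seq e <- divisors n | (e %| d)%N].
Proof.
move=> n0 dn; have d0 := dvdn_gt0 n0 dn.
apply: uniq_perm; first exact: divisors_uniq.
  exact/filter_uniq/divisors_uniq.
move=> x; rewrite mem_filter -(dvdn_divisors _ n0) -(dvdn_divisors _ d0).
by case xd: (x %| d)%N => //=; rewrite (dvdn_trans xd dn).
Qed.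

Lemma moebius_inv n (f : nat -> rat) : (0 < n)%N ->
  \sum_(d <- divisors n) moebius (n %/ d)%N * \sum_(e <- divisors d) f e = f n.
Proof.
move=> n0.
transitivity (\sum_(d <- divisors n) \sum_(e <- divisors n | (e %| d)%N)
                 moebius (n %/ d)%N * f e).
  apply: eq_big_seq => d; rewrite -dvdn_divisors // => dn.
  by rewrite (perm_big _ (sub_divisors_perm n0 dn)) big_filter big_distrr.
rewrite (exchange_big_dep xpredT) //=.
transitivity (\sum_(e <- divisors n) f e * ((n %/ e)%N == 1%N)%:R).
  apply: eq_big_seq => e; rewrite -dvdn_divisors // => en.
  have e0 := dvdn_gt0 n0 en.
  have m0 : (0 < n %/ e)%N by rewrite divn_gt0 // dvdn_leq.
  rewrite -moebius_sum // -(sum_divisors_rev _ m0) big_distrr /=.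
  rewrite -big_filter (perm_big _ (mem_div_perm e0 en n0)) big_map.
  by apply: eq_bigr => k _; rewrite divnMA mulrC.
rewrite (bigD1_seq n) ?divisors_id ?divisors_uniq //= divnn n0 eqxx mulr1.
rewrite big_seq_cond big1 ?addr0 // => e /andP[]; rewrite -dvdn_divisors // => en ne.
case: eqP => [E|]; last by rewrite mulr0.
by move: ne; rewrite -{1}(divnK en) E mul1n eqxx.
Qed.

Lemma lin_eval mu i : (0 < i)%N -> pbar_lin_eval mu i = (mult i mu)%:R.
Proof.
move=> i0; rewrite /pbar_lin_eval /p_eval.
rewrite (moebius_inv (fun e => (e * mult e mu)%:R)) // natrM mulKf //.
by rewrite pnatr_eq0 -lt0n.
Qed.

Lemma falling_zero m r : (m < r)%N -> falling m%:R r = 0.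
Proof.
by move=> H; rewrite /falling (bigD1 (Ordinal H)) //= subrr mul0r.
Qed.

Lemma falling_fact m : falling m%:R m = (m`!)%:R.
Proof.
rewrite /falling -ffactnn ffact_prod natr_prod; apply: eq_bigr => j _.
by rewrite natrB // ltnW.
Qed.

Lemma sum_ind a b x :
  (\sum_(a <= i < b) i * (x == i) = x * (a <= x < b))%N.
Proof.
elim: b => [|b IH]; first by rewrite big_geq // andbF muln0.
case: (leqP a b) => ab; last first.
  rewrite big_geq //; case: (leqP a x) => ax /=; last by rewrite muln0.
  by rewrite ltnS leqNgt (leq_trans ab ax) muln0.
rewrite big_nat_recr //= IH; case: (ltngtP x b) => xb.
- by rewrite ltnS (ltnW xb) andbT muln0 addn0.
- by rewrite ltnS (leqNgt x b) xb andbF !muln0.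
- by subst x; rewrite ltnSn ab andbF !muln0 add0n !muln1.
Qed.

Definition Tot (s : seq nat) K := (\sum_(1 <= i < K) i * mult i s)%N.

Lemma Tot_cons x s K : Tot (x :: s) K = (x * (1 <= x < K) + Tot s K)%N.
Proof.
rewrite /Tot /mult /= -sum_ind -big_split /=; apply: eq_bigr => i _.
by rewrite mulnDr.
Qed.

Lemma Tot_le s K : (Tot s K <= sumn s)%N.
Proof.
elim: s => [|x s IH]; first by rewrite /Tot big1 // => i _; rewrite /mult /= muln0.  
rewrite Tot_cons /=; apply: leq_add => //.
by rewrite -[X in (_ <= X)%N]muln1 leq_mul2l leq_b1 orbT.
Qed.

Lemma Tot_eq s K : all (fun x => 0 < x < K)%N s -> Tot s K = sumn s.
Proof.
elim: s => [|x s IH]; first by rewrite /Tot big1 // => i _; rewrite /mult /= muln0.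
by rewrite Tot_cons /= => /andP[-> /IH ->]; rewrite muln1.
Qed.

Lemma mem_leq_sumn s x : x \in s -> (x <= sumn s)%N.
Proof.
elim: s => // y s IH; rewrite in_cons => /orP[/eqP->|/IH]; first exact: leq_addr.
by move=> H; apply: (leq_trans H); exact: leq_addl.
Qed.

Lemma part_range s K : is_partition s -> (sumn s < K)%N ->
  all (fun x => 0 < x < K)%N s.
Proof.
case/andP => _ /allP pos sK; apply/allP => x xs; rewrite pos //=.
exact: leq_ltn_trans (mem_leq_sumn xs) sK.
Qed.

Lemma count_out s K x : all (fun x => 0 < x < K)%N s -> ~~ (0 < x < K)%N ->
  mult x s = 0%N.
Proof.
move=> /allP H nx; apply/count_memPn; apply: contra nx => xs; exact: H.
Qed.

Theorem lemma14 (gamma mu : seq nat) :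
  is_partition gamma -> is_partition mu ->
  ((psize mu < psize gamma)%N -> pbar_eval gamma mu = 0) /\
  (psize mu = psize gamma ->
     pbar_eval gamma mu = (zee gamma)%:R * (gamma == mu)%:R).
Proof.
move=> pg pm; set N := psize gamma.
have rg : all (fun x => 0 < x < N.+1)%N gamma by apply: part_range.
have Tg : Tot gamma N.+1 = N by rewrite Tot_eq.
have Tm : (Tot mu N.+1 <= psize mu)%N by apply: Tot_le.
have E : pbar_eval gamma mu = \prod_(i <- index_iota 1 N.+1)
     ((i ^ mult i gamma)%:R * falling (mult i mu)%:R (mult i gamma)).
  rewrite /pbar_eval big_seq [RHS]big_seq; apply: eq_bigr => i.
  rewrite mem_index_iota => /andP[i0 _].
  by rewrite /pbar_pow_eval lin_eval.
have [C|] := boolP (all (fun i => mult i gamma <= mult i mu)%N (index_iota 1 N.+1)).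
  have Tle : (Tot gamma N.+1 <= Tot mu N.+1)%N.
    rewrite /Tot big_seq [X in (_ <= X)%N]big_seq; apply: leq_sum => i Hi.
    by rewrite leq_mul2l (allP C i Hi) orbT.
  split=> [lt|eqN].
    by move: (leq_trans Tle Tm); rewrite Tg leqNgt lt.
  have Eq : forall i, i \in index_iota 1 N.+1 -> mult i gamma = mult i mu.
    move=> i Hi; apply/eqP; rewrite eqn_leq (allP C i Hi) /=; rewrite leqNgt.
    apply/negP => lt.
    have i0 : (0 < i)%N by move: Hi; rewrite mem_index_iota => /andP[].
    have : (Tot gamma N.+1 < Tot mu N.+1)%N.
      rewrite /Tot !(bigD1_seq i Hi (iota_uniq _ _)) /=.
      apply: (@leq_trans (i * mult i mu + \sum_(i1 <- index_iota 1 N.+1 | i1 != i) i1 * mult i1 gamma))%N.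
        by rewrite ltn_add2r ltn_pmul2l.
      rewrite leq_add2l big_seq_cond [X in (_ <= X)%N]big_seq_cond; apply: leq_sum => j.
      by case/andP => Hj _; rewrite leq_mul2l (allP C j Hj) orbT.
    by move=> H; move: (leq_trans H Tm); rewrite Tg eqN ltnn.
  have rm : all (fun x => 0 < x < N.+1)%N mu by apply: part_range => //; rewrite -[sumn mu]/(psize mu) eqN.
  have gm : gamma = mu.
    apply: (sorted_eq (leT := geq)).
    - by move=> a b c ba cb; exact: leq_trans cb ba.
    - by move=> a b /andP[ab ba]; apply: anti_leq; apply/andP; split.
    - by case/andP: pg.
    - by case/andP: pm.
    rewrite /perm_eq; apply/allP => x _; apply/eqP.
    case: (boolP (0 < x < N.+1)%N) => Hx.
      by apply: Eq; rewrite mem_index_iota.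
    by rewrite -/(mult x gamma) -/(mult x mu) !(count_out _ Hx).
  rewrite E -gm eqxx mulr1 /zee natr_prod; apply: eq_bigr => i _.
  by rewrite falling_fact natrM.
case/allPn => i Hi; rewrite -ltnNge => lt.
have Z : pbar_eval gamma mu = 0.
  by rewrite E (bigD1_seq i Hi (iota_uniq _ _)) /= falling_zero // mulr0 mul0r.
split=> [_|_]; first exact: Z.
have -> : (gamma == mu) = false by apply/negbTE; apply: contraL lt => /eqP ->; rewrite ltnn.
by rewrite Z mulr0.
Qed.
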